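(* Let $1\le p<\infty$. Let $\boldsymbol v=(v_n)_{n\in\mathbb{N}}$ and $\boldsymbol w=(w_n)_{n\in\mathbb{N}}$ be weight sequences such that $B_{\boldsymbol v}$ is frequently hypercyclic and $B_{\boldsymbol w}$ is hypercyclic on $\ell_p$. Assume that for all increasing sequences $(m_k)$ and $(n_k)$ of positive integers tending to infinity with $\liminf_{k\to\infty}n_k/m_k>0$ and $\limsup_{k\to\infty}n_k/m_k<1$, \[ \sum_{l\ge1}\frac{|w_1\cdots w_{m_l}|^p}{|v_1\cdots v_{m_l}|^p\,|w_1\cdots w_{m_l-n_l}|^p}=\infty . \] Then $FHC(B_{\boldsymbol v})\cap HC(B_{\boldsymbol w})=\emptyset$.
   Context: $\ell_p$ is the space of complex sequences $(x_n)_{n\ge0}$ with finite $\|x\|_p$, unit vectors $(e_n)_{n\ge0}$. A weight is a bounded sequence of nonzero complex numbers; $B_{\boldsymbol w}e_0=0$, $B_{\boldsymbol w}e_n=w_ne_{n-1}$; the empty product $w_1\cdots w_0$ equals $1$. $HC(T)$ is the set of vectors whose orbit $\{T^nx\}$ is dense; $FHC(T)$ is the set of vectors $x$ such that for every nonempty open $U$, $\{n:T^nx\in U\}$ has positive lower density ($\liminf_n\#(\cdot\cap[1,n])/n>0$). An operator is (frequently) hypercyclic if it has a (frequently) hypercyclic vector. *)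

(* Defs.v *)
From Stdlib Require Import Reals ClassicalEpsilon.
From Coquelicot Require Import Coquelicot.
Open Scope R_scope.

Definition rpow (a p : R) : R := if Req_EM_T a 0 then 0 else Rpower a p.

Definition seqC := nat -> C.

Definition in_lp (p : R) (x : seqC) : Prop :=
  ex_series (fun n => rpow (Cmod (x n)) p).

Definition lp_norm (p : R) (x : seqC) : R :=
  rpow (Series (fun n => rpow (Cmod (x n)) p)) (/ p).

Definition lp_dist (p : R) (x y : seqC) : R :=
  lp_norm p (fun n => Cminus (x n) (y n)).

Definition is_weight (w : nat -> C) : Prop :=
  (forall n, (1 <= n)%nat -> w n <> 0%C) /\ (exists M, forall n, Cmod (w n) <= M).

Fixpoint wprod (w : nat -> C) (n : nat) : C :=
  match n with
  | O => 1%C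
  | S k => Cmult (wprod w k) (w (S k))
  end.

(* weighted backward shift: B_w e_0 = 0, B_w e_n = w_n e_{n-1},
   i.e. (B_w x)_n = w_{n+1} x_{n+1} *)
Definition Bw (w : nat -> C) (x : seqC) : seqC :=
  fun n => Cmult (w (S n)) (x (S n)).

Definition iterT (T : seqC -> seqC) (k : nat) (x : seqC) : seqC :=
  Nat.iter k T x.

Definition lp_open_nonempty (p : R) (U : seqC -> Prop) : Prop :=
  (forall y, U y -> in_lp p y) /\ (exists y, U y) /\
  (forall y, U y -> exists eps, 0 < eps /\
     forall z, in_lp p z -> lp_dist p z y < eps -> U z).

Definition HC (p : R) (T : seqC -> seqC) (x : seqC) : Prop :=
  in_lp p x /\
  forall y eps, in_lp p y -> 0 < eps -> exists n, lp_dist p (iterT T n x) y < eps.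

Definition indic (P : Prop) : R :=
  if excluded_middle_informative P then 1 else 0.

Definition visit_count (T : seqC -> seqC) (x : seqC) (U : seqC -> Prop) (N : nat) : R :=
  sum_n_m (fun k => indic (U (iterT T k x))) 1 N.

Definition FHC (p : R) (T : seqC -> seqC) (x : seqC) : Prop :=
  in_lp p x /\
  forall U, lp_open_nonempty p U ->
    Rbar_lt (Finite 0)
      (LimInf_seq (fun N => visit_count T x U (S N) / INR (S N))).

Definition hypercyclic (p : R) (T : seqC -> seqC) : Prop := exists x, HC p T x.
Definition freq_hypercyclic (p : R) (T : seqC -> seqC) : Prop := exists x, FHC p T x.

(* Main.v *)
Require Import Defs.
From Stdlib Require Import Reals.
From Coquelicot Require Import Coquelicot.
Open Scope R_scope.
From Stdlib Require Import Lra Lia ClassicalEpsilon.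

Lemma rpow_ge0 a p : 0 <= rpow a p.
Proof. unfold rpow; destruct (Req_EM_T a 0); [lra|]. unfold Rpower; left; apply exp_pos. Qed.

Lemma rpow_pos a p : 0 < a -> 0 < rpow a p.
Proof. intros; unfold rpow; destruct (Req_EM_T a 0); [lra|]. unfold Rpower; apply exp_pos. Qed.

Lemma rpow_le a b p : 0 < p -> 0 <= a <= b -> rpow a p <= rpow b p.
Proof.
  intros Hp [Ha Hab]. unfold rpow at 1. destruct (Req_EM_T a 0). apply rpow_ge0.
  unfold rpow; destruct (Req_EM_T b 0); [lra|]. apply Rle_Rpower_l; lra.
Qed.

Lemma rpow_mult a b p : 0 <= a -> 0 <= b -> rpow (a*b) p = rpow a p * rpow b p.
Proof.
  intros Ha Hb. destruct (Req_dec a 0) as [->|Ha0].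
  { rewrite Rmult_0_l. unfold rpow; destruct (Req_EM_T 0 0); [lra|congruence]. }
  destruct (Req_dec b 0) as [->|Hb0].
  { rewrite Rmult_0_r. unfold rpow at 1 3; destruct (Req_EM_T 0 0); [lra|congruence]. }
  unfold rpow. destruct (Req_EM_T (a*b) 0). { apply Rmult_integral in e; tauto. }
  destruct (Req_EM_T a 0); [congruence|]. destruct (Req_EM_T b 0); [congruence|].
  rewrite Rpower_mult_distr; auto; lra.
Qed.

Lemma rpow_inv_p a p : 0 < p -> 0 <= a -> rpow (rpow a p) (/ p) = a.
Proof.
  intros Hp Ha. destruct (Req_dec a 0) as [->|Ha0].
  { unfold rpow; destruct (Req_EM_T 0 0); [|congruence]. destruct (Req_EM_T 0 0); [lra|congruence]. }
  assert (0 < rpow a p) by (apply rpow_pos; lra).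
  unfold rpow at 1. destruct (Req_EM_T (rpow a p) 0); [lra|].
  unfold rpow. destruct (Req_EM_T a 0); [congruence|].
  rewrite Rpower_mult. rewrite Rinv_r by lra. apply Rpower_1; lra.
Qed.

Lemma rpow_le_self t p : 1 <= p -> 0 <= t <= 1 -> rpow t p <= t.
Proof.
  intros Hp Ht. unfold rpow. destruct (Req_EM_T t 0); [lra|].
  unfold Rpower. rewrite <- (exp_ln t) at 2 by lra. assert (ln t <= 0) by (rewrite <- ln_1; apply ln_le; lra).
  destruct (Req_dec (p*ln t) (ln t)) as [E|E]; [rewrite E; lra| left; apply exp_increasing; nra].
Qed.


Lemma sum_n_nonneg (s : nat -> R) k : (forall n, 0 <= s n) -> 0 <= sum_n s k.
Proof.
  intros Hs. induction k. rewrite sum_O; auto. rewrite sum_Sn; unfold plus; simpl. specialize (Hs (S k)). lra.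
Qed.

Lemma sum_n_ge_term (s : nat -> R) k j : (forall n, 0 <= s n) -> (k <= j)%nat -> s k <= sum_n s j.
Proof.
  intros Hs Hkj. induction Hkj.
  - destruct k. rewrite sum_O; lra. rewrite sum_Sn. unfold plus; simpl.
    pose proof (sum_n_nonneg s k Hs). lra.
  - rewrite sum_Sn; unfold plus; simpl. specialize (Hs (S m)); lra.
Qed.

Lemma series_ge_term (s : nat -> R) k : (forall n, 0 <= s n) -> ex_series s -> s k <= Series s.
Proof.
  intros Hs He. pose proof (Series_correct _ He) as Hc.
  unfold is_series in Hc.
  assert (Hl : is_lim_seq (sum_n s) (Series s)) by exact Hc.
  rewrite (is_lim_seq_incr_n _ k) in Hl.
  assert (Rbar_le (s k) (Series s)).
  { eapply is_lim_seq_le; [|apply is_lim_seq_const|exact Hl].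
    intros n; simpl. apply sum_n_ge_term; auto; lia. }
  exact H.
Qed.

Lemma coord_bound p z k : 0 < p -> in_lp p z -> Cmod (z k) <= lp_norm p z.
Proof.
  intros Hp Hz. unfold lp_norm.
  rewrite <- (rpow_inv_p (Cmod (z k)) p) by (auto; apply Cmod_ge_0).
  apply rpow_le. apply Rinv_0_lt_compat; auto.
  split. apply rpow_ge0.
  apply (series_ge_term (fun n => rpow (Cmod (z n)) p)); auto. intros; apply rpow_ge0.
Qed.

Lemma ex_series_R_le (a b : nat -> R) : (forall n, 0 <= a n <= b n) -> ex_series b -> ex_series a.
Proof.
  intros H Hb. apply (ex_series_le a b); auto.
  intros n. unfold norm; simpl. unfold abs; simpl. rewrite Rabs_pos_eq; apply H.
Qed.

Lemma in_lp_minus p z y : 0 < p -> in_lp p z -> in_lp p y -> in_lp p (fun n => Cminus (z n) (y n)).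
Proof.
  intros Hp Hz Hy. unfold in_lp in *.
  apply (ex_series_R_le _ (fun n => scal (rpow 2 p) (plus (rpow (Cmod (z n)) p) (rpow (Cmod (y n)) p)))).
  2: { apply (@ex_series_scal_l R_AbsRing R_NormedModule). apply (@ex_series_plus R_AbsRing R_NormedModule); auto. }
  intros n; split. apply rpow_ge0.
  unfold scal, plus; simpl; unfold mult; simpl.
  set (a := Cmod (z n)); set (b := Cmod (y n)).
  assert (Ha : 0 <= a) by apply Cmod_ge_0. assert (Hb : 0 <= b) by apply Cmod_ge_0.
  assert (Ht : Cmod (Cminus (z n) (y n)) <= 2 * Rmax a b).
  { unfold Cminus. eapply Rle_trans. apply Cmod_triangle. rewrite Cmod_opp.
    fold a b. pose proof (Rmax_l a b); pose proof (Rmax_r a b); lra. }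
  eapply Rle_trans. apply rpow_le; [auto| split; [apply Cmod_ge_0| exact Ht]].
  rewrite rpow_mult by (first [lra | apply Rle_trans with a; [auto|apply Rmax_l]]).
  pose proof (rpow_ge0 2 p). pose proof (rpow_ge0 a p). pose proof (rpow_ge0 b p).
  apply Rmult_le_compat_l; auto.
  unfold Rmax; destruct (Rle_dec a b); lra.
Qed.

Lemma in_lp_Bw p w M x : 0 < p -> (forall n, Cmod (w n) <= M) -> in_lp p x -> in_lp p (Bw w x).
Proof.
  intros Hp HM Hx. unfold in_lp in *. apply ex_series_incr_1 in Hx.
  apply (ex_series_R_le _ (fun n => scal (rpow M p) (rpow (Cmod (x (S n))) p))).
  2: { apply (@ex_series_scal_l R_AbsRing R_NormedModule); auto. }
  intros n; split. apply rpow_ge0. unfold scal; simpl; unfold mult; simpl.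
  unfold Bw. rewrite Cmod_mult. rewrite rpow_mult by apply Cmod_ge_0.
  apply Rmult_le_compat_r. apply rpow_ge0. apply rpow_le; auto. split. apply Cmod_ge_0. auto.
Qed.

Lemma in_lp_iter p w M x k : 0 < p -> (forall n, Cmod (w n) <= M) -> in_lp p x -> in_lp p (iterT (Bw w) k x).
Proof.
  intros Hp HM Hx. induction k; simpl; auto. unfold iterT; simpl. eapply in_lp_Bw; eauto.
Qed.

Lemma ex_series_zero : ex_series (fun _ : nat => 0).
Proof.
  exists 0. assert (H : is_lim_seq (sum_n (fun _ : nat => 0)) 0).
  { apply is_lim_seq_ext with (fun _ => 0).
    intros n. unfold sum_n. rewrite sum_n_m_const. simpl; ring.
    apply is_lim_seq_const. }
  exact H.
Qed.

Lemma in_lp_zero p : in_lp p (fun _ => 0%C).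
Proof.
  unfold in_lp. apply (ex_series_ext (fun _ => 0)). 2: apply ex_series_zero.
  intros; rewrite Cmod_0; unfold rpow; destruct (Req_EM_T 0 0); lra.
Qed.

Definition e0 : seqC := fun n => match n with O => 1%C | _ => 0%C end.

Lemma in_lp_e0 p : in_lp p e0.
Proof.
  unfold in_lp. apply ex_series_incr_1. apply (ex_series_ext (fun _ => 0)). 2: apply ex_series_zero.
  intros; simpl; rewrite Cmod_0; unfold rpow; destruct (Req_EM_T 0 0); lra.
Qed.


Fixpoint Pr (w : nat -> C) (n k : nat) : C :=
  match k with O => 1%C | S k => Cmult (w (S n)) (Pr w (S n) k) end.

Lemma iter_formula w x k : forall n, iterT (Bw w) k x n = Cmult (Pr w n k) (x (n + k)%nat).
Proof.
  induction k; intros n; simpl.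
  - rewrite Nat.add_0_r. unfold iterT; simpl. ring.
  - unfold iterT in *; simpl. unfold Bw at 1. rewrite IHk.
    replace (S n + k)%nat with (n + S k)%nat by lia. ring.
Qed.

Lemma wprod_split w k : forall n, wprod w (n + k) = Cmult (wprod w n) (Pr w n k).
Proof.
  induction k; intros n; simpl.
  - rewrite Nat.add_0_r. ring.
  - replace (n + S k)%nat with (S n + k)%nat by lia. rewrite IHk. simpl. ring.
Qed.

Lemma Cmult_nz (a b : C) : a <> 0%C -> b <> 0%C -> Cmult a b <> 0%C.
Proof.
  intros Ha Hb. apply Cmod_gt_0. rewrite Cmod_mult. apply Cmod_gt_0 in Ha, Hb. nra.
Qed.

Lemma wprod_nz w : is_weight w -> forall n, wprod w n <> 0%C.
Proof.
  intros [Hw _] n. induction n; simpl.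
  - intro H. injection H. lra.
  - apply Cmult_nz; auto. apply Hw; lia.
Qed.

Lemma Pr_nz w : is_weight w -> forall k n, Pr w n k <> 0%C.
Proof.
  intros Hw k n. intro H. pose proof (wprod_split w k n). rewrite H, Cmult_0_r in H0.
  eapply wprod_nz; eauto.
Qed.


Lemma INR_unb (M : R) : exists n : nat, M < INR n.
Proof.
  pose proof is_lim_seq_INR as H. apply is_lim_seq_spec in H. destruct (H M) as [N HN].
  exists N. apply HN. auto.
Qed.

Lemma sum_pos_ex (f : nat -> R) a d : sum_n_m f a (a + d) > 0 -> exists k, (a <= k <= a + d)%nat /\ f k > 0.
Proof.
  induction d; intros H.
  - rewrite Nat.add_0_r in *. rewrite sum_n_n in H. exists a; split; [lia|auto].
  - replace (a + S d)%nat with (S (a + d)) in * by lia.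
    rewrite sum_n_Sm in H by lia. unfold plus in H; simpl in H.
    destruct (Rlt_dec 0 (f (S (a + d)))) as [Hp|Hp].
    + exists (S (a + d)); split; [lia|lra].
    + destruct IHd as [k [Hk1 Hk2]]. lra. exists k; split; [lia|auto].
Qed.

Lemma indic_pos P : indic P > 0 -> P.
Proof. unfold indic; destruct (excluded_middle_informative P); auto; lra. Qed.

Lemma indic_le1 P : indic P <= 1.
Proof. unfold indic; destruct (excluded_middle_informative P); lra. Qed.

Lemma Cminus_0 a : Cminus a 0%C = a.
Proof. destruct a; unfold Cminus, Cplus, Copp; simpl. f_equal; ring. Qed.

Definition Uset (p : R) (y : seqC) : Prop := in_lp p y /\ Cmod (Cminus (y O) 1%C) < 1/2.

Lemma Uset_open p : 0 < p -> lp_open_nonempty p (Uset p).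
Proof.
  intros Hp. split; [|split].
  - intros y [H _]; auto.
  - exists e0. split. apply in_lp_e0. replace (Cminus (e0 0%nat) 1%C) with (RtoC 0). rewrite Cmod_0; lra.
    simpl. unfold Cminus. ring.
  - intros y [Hy Hy0]. exists (1/2 - Cmod (Cminus (y O) 1%C)). split; [lra|].
    intros z Hz Hd. split; auto.
    pose proof (coord_bound p _ O Hp (in_lp_minus p z y Hp Hz Hy)) as Hc. unfold lp_dist in Hd.
    replace (Cminus (z O) 1%C) with (Cplus (Cminus (z O) (y O)) (Cminus (y O) 1)).
    eapply Rle_lt_trans. apply Cmod_triangle. lra.
    unfold Cminus. ring.
Qed.

Lemma fhc_density p v x : 0 < p -> FHC p (Bw v) x ->
  exists K J0, (2 <= K)%nat /\ forall j, (J0 <= j)%nat ->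
    exists m, (2*j < m)%nat /\ (m <= K*j)%nat /\ 1/2 < Cmod (Cmult (wprod v m) (x m)).
Proof.
  intros Hp [Hx HF]. specialize (HF _ (Uset_open p Hp)).
  set (u := fun N => visit_count (Bw v) x (Uset p) (S N) / INR (S N)) in HF.
  assert (Hd : exists d N1, 0 < d /\ forall N, (N1 <= N)%nat -> d < u N).
  { destruct (ex_LimInf_seq u) as [l Hl].
    rewrite (is_LimInf_seq_unique _ _ Hl) in HF. destruct l as [r| |]; simpl in HF.
    - destruct (Hl (mkposreal (r/2) ltac:(lra))) as [_ [N HN]]. exists (r/2), N. split; [lra|].
      intros n Hn; specialize (HN n Hn); simpl in HN; lra.
    - destruct (Hl 1) as [N HN]. exists 1, N. split; [lra|auto].
    - contradiction. }
  destruct Hd as [d [N1 [Hd HN1]]].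
  destruct (INR_unb (2/d)) as [K0 HK0].
  exists (Nat.max 3 K0), (S N1). split; [lia|].
  intros j Hj. set (K := Nat.max 3 K0) in *. assert (HK3 : (3 <= K)%nat) by lia. assert (Hj1 : (1 <= j)%nat) by lia.
  assert (HK : 2/d < INR K). { eapply Rlt_le_trans. exact HK0. apply le_INR; lia. }
  assert (HKd : 2 < d * INR K). { apply (Rmult_lt_compat_l d) in HK; auto. field_simplify in HK; lra. }
  set (f := fun k => indic (Uset p (iterT (Bw v) k x))).
  assert (Hbig : INR (2*j) < sum_n_m f 1 (K*j)).
  { specialize (HN1 (K*j - 1)%nat ltac:(nia)). unfold u, visit_count in HN1.
    replace (S (K * j - 1)) with (K*j)%nat in HN1 by nia. fold f in HN1.
    assert (0 < INR (K*j)) by (apply lt_0_INR; nia).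
    apply (Rmult_lt_compat_r (INR (K*j))) in HN1; auto.
    field_simplify in HN1; try lra. rewrite mult_INR in *.
    assert (0 < INR j) by (apply lt_0_INR; lia). simpl in *. nra. }
  assert (Hsmall : sum_n_m f 1 (2*j) <= INR (2*j)).
  { eapply Rle_trans. apply (sum_n_m_le _ (fun _ => 1)). intros; apply indic_le1.
    rewrite sum_n_m_const. replace (S (2*j) - 1)%nat with (2*j)%nat by lia. lra. }
  rewrite (sum_n_m_Chasles f 1 (2*j) (K*j)) in Hbig by nia. unfold plus in Hbig; simpl in Hbig.
  assert (Hpos : sum_n_m f (S (2*j)) (S (2*j) + (K*j - S (2*j))) > 0).
  { replace (j + (j + 0))%nat with (2*j)%nat in Hbig by lia. replace (S (2*j) + (K*j - S (2*j)))%nat with (K*j)%nat by nia. lra. }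
  destruct (sum_pos_ex _ _ _ Hpos) as [k [Hk1 Hk2]].
  exists k. split; [lia|split; [nia|]].
  apply indic_pos in Hk2. destruct Hk2 as [_ Hk2].
  rewrite iter_formula in Hk2. simpl in Hk2.
  assert (Pr v 0 k = wprod v k). { pose proof (wprod_split v k 0). simpl in H. rewrite H. ring. }
  rewrite H in Hk2.
  set (a := Cmult (wprod v k) (x k)) in *.
  assert (E : (RtoC 1 = Cplus a (Copp (Cminus a 1%C)))) by (unfold Cminus; ring).
  pose proof (Cmod_triangle a (Copp (Cminus a 1%C))) as H0. rewrite <- E, Cmod_opp, Cmod_1 in H0. lra.
Qed.


Lemma hc_big p w x : 0 < p -> is_weight w -> HC p (Bw w) x ->
  (forall i, exists k, iterT (Bw w) i x k <> RtoC 0) ->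
  forall J eps, 0 < eps -> exists j, (J <= j)%nat /\ forall k, Cmod (iterT (Bw w) j x k) < eps.
Proof.
  intros Hp Hw [Hx HH] Hnz J eps Heps.
  destruct Hw as [_ [M HM]].
  set (dist := fun i => lp_dist p (iterT (Bw w) i x) (fun _ => RtoC 0)).
  assert (Hc : forall i k, Cmod (iterT (Bw w) i x k) <= dist i).
  { intros i k. pose proof (coord_bound p _ k Hp (in_lp_minus p _ _ Hp (in_lp_iter p w M x i Hp HM Hx) (in_lp_zero p))) as H.
    cbv beta in H; rewrite Cminus_0 in H. exact H. }
  assert (Hpos : forall i, 0 < dist i).
  { intros i. destruct (Hnz i) as [k Hk]. apply Cmod_gt_0 in Hk. specialize (Hc i k). lra. }
  assert (Hmin : forall J, exists e, 0 < e /\ forall i, (i < J)%nat -> e <= dist i).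
  { induction J0 as [|J0 IH].
    - exists 1. split; [lra| intros; lia].
    - destruct IH as [e [He Hi]]. exists (Rmin e (dist J0)). split.
      apply Rmin_glb_lt; auto.
      intros i Hi'. destruct (Nat.eq_dec i J0) as [->|Hne]. apply Rmin_r.
      eapply Rle_trans. apply Rmin_l. apply Hi. lia. }
  destruct (Hmin J) as [e [He Hei]].
  destruct (HH (fun _ => RtoC 0) (Rmin eps e) (in_lp_zero p)) as [j Hj].
  apply Rmin_glb_lt; auto.
  exists j. split.
  - destruct (Compare_dec.le_lt_dec J j) as [|Hlt]; auto. specialize (Hei j Hlt). fold (dist j) in Hj.
    pose proof (Rmin_r eps e). unfold dist in *. lra.
  - intros k. specialize (Hc j k). unfold dist in Hc. pose proof (Rmin_l eps e). lra.
Qed.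


Lemma half_pow_le1 l : (1/2)^l <= 1.
Proof. induction l; simpl; [lra|]. assert (0 < (1/2)^l) by (apply pow_lt; lra). lra. Qed.

Lemma geom_sum L : sum_n (fun l => (1/2)^(l+1)) L = 1 - (1/2)^(L+1).
Proof.
  induction L. rewrite sum_O. simpl. lra.
  rewrite sum_Sn. unfold plus; simpl. rewrite IHL.
  replace (S L + 1)%nat with (S (L+1)) by lia. simpl. lra.
Qed.

Lemma term_bound p (a b c P X eps : R) : 1 <= p -> 0 < a -> 0 < b -> 0 < c -> 0 <= P -> 0 <= X ->
  a = c * P -> 1/2 < b * X -> P * X < eps -> 2 * eps <= 1 ->
  rpow a p / (rpow b p * rpow c p) <= 2 * eps.
Proof.
  intros Hp Ha Hb Hc HP HX Ea HbX HPX He.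
  set (t := a / (b * c)).
  assert (Ht0 : 0 <= t) by (unfold t; apply Rle_mult_inv_pos; nra).
  assert (Hta : a = t * b * c) by (unfold t; field; lra).
  assert (Ht : t <= 2 * eps).
  { unfold t. rewrite Ea. replace (c * P / (b * c)) with (P / b) by (field; lra).
    apply Rmult_le_reg_r with b; auto. unfold Rdiv. rewrite Rmult_assoc, Rinv_l by lra.
    nra. }
  assert (E : rpow a p = rpow t p * rpow b p * rpow c p).
  { rewrite Hta. rewrite rpow_mult by nra. rewrite rpow_mult by lra. ring. }
  rewrite E. pose proof (rpow_pos b p Hb). pose proof (rpow_pos c p Hc).
  replace (rpow t p * rpow b p * rpow c p / (rpow b p * rpow c p)) with (rpow t p) by (field; lra).
  eapply Rle_trans. apply rpow_le_self; auto; lra. auto.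
Qed.

Lemma ratio_aux J Mm Kr: 0<J -> 2 <= Kr -> 2*J < Mm -> Mm <= Kr*J -> 1/Kr <= J/Mm <= 1/2.
Proof.
  intros HJ HK H1 H2. assert (0 < Mm) by lra.
  split.
  - replace (J/Mm) with (1/Kr * ((Kr*J)/Mm)) by (field; lra).
    rewrite <- (Rmult_1_r (1/Kr)) at 1. apply Rmult_le_compat_l.
    left; apply Rdiv_lt_0_compat; lra.
    apply Rmult_le_reg_r with Mm; auto. unfold Rdiv; rewrite Rmult_assoc, Rinv_l; lra.
  - apply Rmult_le_reg_r with Mm; auto. unfold Rdiv; rewrite Rmult_assoc, Rinv_l; lra.
Qed.

Theorem proposition4p6 (p : R) (v w : nat -> C) :
  1 <= p ->
  is_weight v -> is_weight w ->
  freq_hypercyclic p (Bw v) ->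
  hypercyclic p (Bw w) ->
  (forall m n : nat -> nat,
      (forall k, (1 <= m k)%nat) -> (forall k, (1 <= n k)%nat) ->
      (forall k, (m k <= m (S k))%nat) -> (forall k, (n k <= n (S k))%nat) ->
      is_lim_seq (fun k => INR (m k)) p_infty ->
      is_lim_seq (fun k => INR (n k)) p_infty ->
      Rbar_lt (Finite 0) (LimInf_seq (fun k => INR (n k) / INR (m k))) ->
      Rbar_lt (LimSup_seq (fun k => INR (n k) / INR (m k))) (Finite 1) ->
      is_lim_seq
        (sum_n (fun l =>
           rpow (Cmod (wprod w (m l))) p /
           (rpow (Cmod (wprod v (m l))) p * rpow (Cmod (wprod w (m l - n l))) p)))
        p_infty) ->
  forall x : seqC, ~ (FHC p (Bw v) x /\ HC p (Bw w) x).
Proof.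
  intros Hp1 Hv Hw _ _ Hyp x [Hfhc Hhc].
  assert (Hp : 0 < p) by lra.
  destruct (fhc_density p v x Hp Hfhc) as [K [J0 [HK Hdens]]].
  assert (Hnz : forall i, exists k, iterT (Bw w) i x k <> RtoC 0).
  { intros i. destruct (Hdens (Nat.max J0 i) ltac:(lia)) as [m [Hm1 [_ Hm]]].
    exists (m - i)%nat. rewrite iter_formula. replace (m - i + i)%nat with m by lia.
    apply Cmult_nz. apply Pr_nz; auto.
    intro E. rewrite E, Cmult_0_r, Cmod_0 in Hm. lra. }
  assert (Hch : forall l prev : nat, exists j, (Nat.max (Nat.max J0 (S l)) (K * prev) <= j)%nat /\
     forall k, Cmod (iterT (Bw w) j x k) < (1/2)^(l+2)).
  { intros l prev. apply hc_big with p; auto. apply pow_lt; lra. }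
  pose (F := fun l prev => proj1_sig (constructive_indefinite_description _ (Hch l prev))).
  assert (HF : forall l prev, (Nat.max (Nat.max J0 (S l)) (K * prev) <= F l prev)%nat /\
     forall k, Cmod (iterT (Bw w) (F l prev) x k) < (1/2)^(l+2)).
  { intros l prev. exact (proj2_sig (constructive_indefinite_description _ (Hch l prev))). }
  pose (js := fun l => nat_rect (fun _ => nat) (F 0%nat 0%nat) (fun l prev => F (S l) prev) l).
  assert (Hjs0 : forall l, (Nat.max (Nat.max J0 (S l)) (K * match l with O => 0 | S l' => js l' end) <= js l)%nat /\
     forall k, Cmod (iterT (Bw w) (js l) x k) < (1/2)^(l+2)).
  { intros [|l]; apply HF. }
  assert (Hd' : forall j, exists m, (J0 <= j)%nat -> (2*j < m)%nat /\ (m <= K*j)%nat /\ 1/2 < Cmod (Cmult (wprod v m) (x m))).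
  { intros j. destruct (Compare_dec.le_lt_dec J0 j) as [H|H].
    - destruct (Hdens j H) as [m Hm]. exists m; auto.
    - exists O; intros; lia. }
  pose (G := fun j => proj1_sig (constructive_indefinite_description _ (Hd' j))).
  assert (HG : forall j, (J0 <= j)%nat -> (2*j < G j)%nat /\ (G j <= K*j)%nat /\ 1/2 < Cmod (Cmult (wprod v (G j)) (x (G j)))).
  { intros j. exact (proj2_sig (constructive_indefinite_description _ (Hd' j))). }
  set (ms := fun l => G (js l)).
  assert (Hjl : forall l, (J0 <= js l)%nat /\ (S l <= js l)%nat) by (intros l; destruct (Hjs0 l) as [H _]; lia).
  assert (Hjs : forall l, (K * js l <= js (S l))%nat) by (intros l; destruct (Hjs0 (S l)) as [H _]; lia).
  assert (Hms : forall l, (2 * js l < ms l)%nat /\ (ms l <= K * js l)%nat /\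
            1/2 < Cmod (Cmult (wprod v (ms l)) (x (ms l)))) by (intros l; apply HG, Hjl).
  specialize (Hyp ms js).
  assert (HKr : 2 <= INR K) by (replace 2 with (INR 2) by (simpl; lra); apply le_INR; lia).
  assert (Hratio : forall l, 1 / INR K <= INR (js l) / INR (ms l) <= 1/2).
  { intros l. destruct (Hms l) as [A [B _]]. destruct (Hjl l) as [_ C].
    assert (Hj0 : 0 < INR (js l)) by (apply lt_0_INR; lia).
    assert (A' : 2 * INR (js l) < INR (ms l)) by (replace 2 with (INR 2) by (simpl; lra); rewrite <- mult_INR; apply lt_INR; lia).
    assert (B' : INR (ms l) <= INR K * INR (js l)) by (rewrite <- mult_INR; apply le_INR; lia).
    apply ratio_aux; auto. }
  assert (Hsum := Hyp ltac:(intros l; destruct (Hms l); lia) ltac:(intros l; destruct (Hjl l); lia)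
     ltac:(intros l; destruct (Hms l) as [_ [A _]]; destruct (Hms (S l)) as [B _]; specialize (Hjs l); nia)
     ltac:(intros l; specialize (Hjs l); nia)).
  clear Hyp.
  assert (HlimJ : is_lim_seq (fun k => INR (js k)) p_infty).
  { apply is_lim_seq_le_p_loc with INR. exists O. intros l _. apply le_INR. destruct (Hjl l); lia.
    apply is_lim_seq_INR. }
  assert (HlimM : is_lim_seq (fun k => INR (ms k)) p_infty).
  { apply is_lim_seq_le_p_loc with INR. exists O. intros l _. apply le_INR. destruct (Hjl l); destruct (Hms l); lia.
    apply is_lim_seq_INR. }
  specialize (Hsum HlimM HlimJ).
  assert (HI : Rbar_lt 0 (LimInf_seq (fun k => INR (js k) / INR (ms k)))).
  { apply Rbar_lt_le_trans with (1 / INR K).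
    simpl. apply Rdiv_lt_0_compat; lra.
    rewrite <- (LimInf_seq_const (1 / INR K)). apply LimInf_le. exists O; intros l _; apply Hratio. }
  assert (HS : Rbar_lt (LimSup_seq (fun k => INR (js k) / INR (ms k))) 1).
  { apply Rbar_le_lt_trans with (1/2).
    rewrite <- (LimSup_seq_const (1 / 2)). apply LimSup_le. exists O; intros l _; apply Hratio.
    simpl; lra. }
  specialize (Hsum HI HS).
  assert (Hterm : forall l, rpow (Cmod (wprod w (ms l))) p /
           (rpow (Cmod (wprod v (ms l))) p * rpow (Cmod (wprod w (ms l - js l))) p) <= (1/2)^(l+1)).
  { intros l. destruct (Hms l) as [A [_ C]]. destruct (Hjs0 l) as [_ D].
    set (i := (ms l - js l)%nat). specialize (D i). rewrite iter_formula in D.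
    replace (i + js l)%nat with (ms l) in D by (unfold i; lia).
    rewrite Cmod_mult in C, D.
    replace ((1/2)^(l+1)) with (2 * (1/2)^(l+2)) by (replace (l+2)%nat with (S (l+1)) by lia; simpl; field).
    apply term_bound with (Cmod (Pr w i (js l))) (Cmod (x (ms l))); auto.
    - apply Cmod_gt_0, wprod_nz; auto.
    - apply Cmod_gt_0, wprod_nz; auto.
    - apply Cmod_gt_0, wprod_nz; auto.
    - apply Cmod_ge_0.
    - apply Cmod_ge_0.
    - rewrite <- Cmod_mult, <- wprod_split. f_equal. f_equal. unfold i; lia.
    - replace (l+2)%nat with (S (S l)) by lia. simpl.
      assert (0 < (1/2)^l) by (apply pow_lt; lra). assert ((1/2)^l <= 1) by apply half_pow_le1. lra. }
  assert (Hle : forall L, sum_n (fun l => rpow (Cmod (wprod w (ms l))) p /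
           (rpow (Cmod (wprod v (ms l))) p * rpow (Cmod (wprod w (ms l - js l))) p)) L <= 1).
  { intros L. eapply Rle_trans. unfold sum_n. apply sum_n_m_le. apply Hterm.
    fold (sum_n (fun l => (1/2)^(l+1)) L). rewrite geom_sum.
    assert (0 < (1/2)^(L+1)) by (apply pow_lt; lra). lra. }
  pose proof (is_lim_seq_le _ _ _ _ Hle Hsum (is_lim_seq_const 1)). simpl in H. exact H.
Qed.
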